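(* Let $0<q<1$, $n,m\in\mathbb{N}_0$, and let $x,y$ be complex with $y\neq0$. Then $${}_2\Phi_1\left[\begin{matrix}q^{-n},x;\\ y;\end{matrix}\;q;\,q^{1+m}\right]=\frac{x^n\left(\frac{y}{x};q\right)_n}{(y;q)_n}\sum_{j=0}^m\begin{bmatrix}m\\ j\end{bmatrix}_q\frac{\left(\frac{q^{1-n}}{y},\frac{qx}{y};q\right)_{m-j}}{\left(\frac{xq^{1-n}}{y};q\right)_{m-j}}\left(\frac{q}{y}\right)^j.$$
   Context: Throughout $0<q<1$. For complex $\alpha$: $(\alpha;q)_0=1$, $(\alpha;q)_n=\prod_{k=0}^{n-1}(1-\alpha q^k)$, $(\alpha_1,\dots,\alpha_m;q)_n=(\alpha_1;q)_n\cdots(\alpha_m;q)_n$. The $q$-binomial coefficient is $\begin{bmatrix}m\\ j\end{bmatrix}_q=\frac{(q;q)_m}{(q;q)_j(q;q)_{m-j}}$. Also ${}_2\Phi_1\left[\begin{matrix}a_1,a_2;\\ b_1;\end{matrix}\,q;z\right]=\sum_{k=0}^\infty\frac{(a_1,a_2;q)_k}{(b_1;q)_k}\frac{z^k}{(q;q)_k}$ (terminating when $a_1=q^{-n}$). *)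

(* Defs.v *)
From HB Require Import structures.
From mathcomp Require Import all_boot all_order all_algebra.
From mathcomp Require Import complex.
From mathcomp Require Import reals.
Set Implicit Arguments. Unset Strict Implicit. Unset Printing Implicit Defensive.
Import Order.TTheory GRing.Theory Num.Theory.
Local Open Scope ring_scope.

Definition qpoch {F : comRingType} (a q : F) (n : nat) : F :=
  \prod_(k < n) (1 - a * q ^+ k).

Definition qbinom {F : fieldType} (q : F) (m j : nat) : F :=
  qpoch q q m / (qpoch q q j * qpoch q q (m - j)).

(* Terminating basic hypergeometric series
   2Phi1[q^{-n}, a2; b1; q; z] = sum_{k=0}^{n} (q^{-n},a2;q)_k/(b1;q)_k z^k/(q;q)_k
   (terms with k > n vanish since (q^{-n};q)_k = 0). *)
Definition phi21_term {F : fieldType} (n : nat) (a2 b1 q z : F) : F :=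
  \sum_(k < n.+1)
     qpoch (q ^+ n)^-1 q k * qpoch a2 q k / qpoch b1 q k * z ^+ k / qpoch q q k.

(* Main.v *)
Require Import Defs.
From HB Require Import structures.
From mathcomp Require Import all_boot all_order all_algebra.
From mathcomp Require Import complex.
From mathcomp Require Import reals.
From mathcomp Require Import ring.
Set Implicit Arguments. Unset Strict Implicit. Unset Printing Implicit Defensive.
Import Order.TTheory GRing.Theory Num.Theory.
Local Open Scope ring_scope.

Section Gen.
Variable F : fieldType.
Variable Q : F.
Hypothesis Q0 : Q != 0.
Hypothesis Qk : forall k, (0 < k)%N -> 1 - Q ^+ k != 0.

Local Notation P a k := (qpoch a Q k).

Lemma P0 a : P a 0 = 1.
Proof. by rewrite /qpoch big_ord0. Qed.

Lemma PS a k : P a k.+1 = P a k * (1 - a * Q ^+ k).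
Proof. by rewrite /qpoch big_ord_recr. Qed.

Lemma PSl a k : P a k.+1 = (1 - a) * P (a * Q) k.
Proof.
rewrite /qpoch big_ord_recl expr0 mulr1; congr (_ * _).
by apply: eq_bigr => i _; rewrite /= exprS mulrA.
Qed.

Lemma Padd a k j : P a (k + j)%N = P a k * P (a * Q ^+ k) j.
Proof.
elim: j => [|j IH]; first by rewrite addn0 P0 mulr1.
by rewrite addnS !PS IH -!mulrA exprD.
Qed.

Lemma Pnz a n k : P a n != 0 -> (k <= n)%N -> P a k != 0.
Proof.
move=> H kn; move: H; rewrite -(subnKC kn) Padd mulf_eq0 negb_or.
by case/andP.
Qed.

Lemma PQnz k : P Q k != 0.
Proof.
elim: k => [|k IH]; first by rewrite P0 oner_eq0.
by rewrite PS mulf_neq0 // -exprS Qk.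
Qed.

Definition e n k := P (Q ^+ n)^-1 k / P Q k.

Lemma e0 n : e n 0 = 1.
Proof. by rewrite /e !P0 divr1. Qed.

Lemma eover n : e n n.+1 = 0.
Proof.
by rewrite /e PS mulVf ?subrr ?mulr0 ?mul0r // expf_neq0.
Qed.

Lemma eS n k : e n.+1 k.+1 = e n k.+1 - (Q ^+ n.+1)^-1 * e n k.
Proof.
rewrite /e.
have ha : (Q ^+ n.+1)^-1 = (Q ^+ n)^-1 / Q by rewrite exprSr invfM.
rewrite ha.
set a := (Q ^+ n)^-1.
have h1 : P (a / Q) k.+1 = (1 - a / Q) * P a k by rewrite PSl divfK.
rewrite h1 !PS.
have hq : 1 - Q * Q ^+ k != 0 by rewrite -exprS Qk.
have hv := PQnz k.

field.
by rewrite hq hv Q0.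
Qed.

Definition W n x y := \prod_(i < n) (x - y * Q ^+ i).

Lemma WS n x y : W n.+1 x y = W n x y * (x - y * Q ^+ n).
Proof. by rewrite /W big_ord_recr. Qed.

Lemma WSl n x y : W n.+1 x y = (x - y) * W n x (y * Q).
Proof.
rewrite /W big_ord_recl expr0 mulr1; congr (_ * _).
by apply: eq_bigr => i _; rewrite /= exprS mulrA.
Qed.

Lemma WQ n x y : W n (x * Q) (y * Q) = Q ^+ n * W n x y.
Proof.
rewrite /W -[in Q ^+ n](card_ord n) -prodr_const -big_split /=.
by apply: eq_bigr => i _; ring.
Qed.

Lemma Wx n x y : x != 0 -> W n x y = x ^+ n * P (y / x) n.
Proof.
move=> x0; rewrite /W /qpoch -[in x ^+ n](card_ord n) -prodr_const -big_split /=.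
by apply: eq_bigr => i _; field.
Qed.

Definition G n x y m k := e n k * P x k * P (y * Q ^+ k) (n - k) * (Q ^+ m.+1) ^+ k.
Definition Lc n x y m := \sum_(0 <= k < n.+1) G n x y m k.

Lemma qCV n : forall x y, Lc n x y 0 = W n x y.
Proof.
elim: n => [|n IH] x y.
  by rewrite /Lc big_nat1 /G e0 !P0 /W big_ord0 !mulr1.
have C1 : P y n.+1 + \sum_(0 <= i < n.+1) e n i.+1 * P x i.+1 * P (y * Q ^+ i.+1) (n - i) * Q ^+ i.+1
   = (1 - y * Q ^+ n) * Lc n x y 0.
  rewrite /Lc big_distrr /=.
  rewrite [RHS](@eq_big_nat _ _ _ 0 n.+1 _ (fun k => e n k * P x k * P (y * Q ^+ k) (n.+1 - k) * Q ^+ k)); last first.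
    move=> k /andP [_ kn]; rewrite ltnS in kn.
    rewrite /G expr1 subSn // PS -[y * _ * _]mulrA -exprD subnKC //.
    ring.
  rewrite [RHS]big_nat_recl // [in LHS]big_nat_recr //= eover !mul0r addr0 e0 P0 expr0 mul1r mulr1 subn0 mulr1.
  congr (_ + _); first by rewrite mul1r.
have C2 : \sum_(0 <= i < n.+1) (Q ^+ n.+1)^-1 * e n i * P x i.+1 * P (y * Q ^+ i.+1) (n - i) * Q ^+ i.+1
   = (Q ^+ n)^-1 * (1 - x) * Lc n (x * Q) (y * Q) 0.
  rewrite /Lc big_distrr /=; apply: eq_big_nat => i _.
  rewrite /G expr1 PSl -[y * Q * _]mulrA -exprS.
  have hn : Q ^+ n != 0 by rewrite expf_neq0.
  rewrite !exprS; field.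
  by rewrite hn Q0.
rewrite /Lc big_nat_recl // /G e0 P0 expr0 mulr1 mul1r subn0 mulr1 expr1.
rewrite (@eq_big_nat _ _ _ 0 n.+1 _ (fun i => e n i.+1 * P x i.+1 * P (y * Q ^+ i.+1) (n - i) * Q ^+ i.+1
    - (Q ^+ n.+1)^-1 * e n i * P x i.+1 * P (y * Q ^+ i.+1) (n - i) * Q ^+ i.+1)); last first.
  by move=> i _; rewrite eS subSS; ring.
rewrite big_split /= sumrN mulr1 addrA C1 C2 !IH WQ WS.
have hn : Q ^+ n != 0 by rewrite expf_neq0.
by field.
Qed.

Lemma keyP a j : a * P (a * Q) j = P (a * Q) j - P a j * (1 - a * Q ^+ j).
Proof. have := PSl a j; rewrite PS => ->; ring. Qed.

Lemma LcS n x y m : y != 0 ->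
  Lc n x y m.+1 = (Q / y) * Lc n x y m - (Q / y) * (1 - (y / Q) * Q ^+ n) * Lc n x (y / Q) m.
Proof.
move=> y0; rewrite /Lc !big_distrr /= -sumrB; apply: eq_big_nat => i /andP [_ hi].
rewrite ltnS in hi; rewrite /G.
have e1 : y * Q ^+ i = (y / Q * Q ^+ i) * Q by field.
have e2 : (y / Q * Q ^+ i) * Q ^+ (n - i) = y / Q * Q ^+ n by rewrite -mulrA -exprD subnKC.
have K := keyP (y / Q * Q ^+ i) (n - i).
rewrite -e1 e2 in K.
set P1 := P (y * Q ^+ i) (n - i) in K *.
set P2 := P (y / Q * Q ^+ i) (n - i) in K *.
have K2 : P2 * (1 - y / Q * Q ^+ n) = P1 - (y / Q * Q ^+ i) * P1 by rewrite K; ring.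
rewrite exprS exprMn.
set Z := (Q ^+ m.+1) ^+ i.
have -> : Q / y * (1 - y / Q * Q ^+ n) * (e n i * P x i * P2 * Z) = Q / y * (e n i * P x i * Z) * (P2 * (1 - y / Q * Q ^+ n)) by ring.
rewrite K2; field.
by rewrite y0 Q0.
Qed.

Fixpoint qb (m j : nat) : F :=
  match m, j with
  | 0, 0 => 1
  | 0, _.+1 => 0
  | m'.+1, 0 => 1
  | m'.+1, j'.+1 => Q ^+ j'.+1 * qb m' j'.+1 + qb m' j'
  end.

Lemma qb_over m j : (m < j)%N -> qb m j = 0.
Proof.
elim: m j => [|m IH] [|j] //= hj.
by rewrite !IH // ?mulr0 ?addr0 // ltnW.
Qed.

Lemma qb_m0 m : qb m 0 = 1.
Proof. by case: m. Qed.


Lemma qbSS m j : qb m.+1 j.+1 = Q ^+ j.+1 * qb m j.+1 + qb m j.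
Proof. by []. Qed.

Lemma qbinom_mm m : qbinom Q m m = 1.
Proof. by rewrite /qbinom subnn P0 mulr1 divff // PQnz. Qed.

Lemma qbinomE m j : (j <= m)%N -> qbinom Q m j = qb m j.
Proof.
elim: m j => [|m IH] [|j] hj.
- by rewrite qbinom_mm.
- by [].
- by rewrite /qbinom P0 mul1r subn0 divff // PQnz.
rewrite ltnS in hj.
rewrite qbSS.
move: hj; rewrite leq_eqVlt => /orP [/eqP ->|jm].
  by rewrite qbinom_mm (qb_over (ltnSn m)) mulr0 add0r -(IH m (leqnn m)) qbinom_mm.
rewrite -(IH j.+1 jm) -(IH j (ltnW jm)).
rewrite /qbinom subSS.
have -> : (m - j = (m - j.+1).+1)%N by rewrite subnSK.
set d := (m - j.+1)%N.
have hm : m = (j.+1 + d)%N by rewrite subnKC.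
rewrite hm (PS Q (j.+1 + d)) (PS Q j) (PS Q d).
have h1 := PQnz j. have h2 := PQnz d. have h3 := PQnz (j.+1 + d).
have h4 : 1 - Q * Q ^+ j != 0 by rewrite -exprS Qk.
have h5 : 1 - Q * Q ^+ d != 0 by rewrite -exprS Qk.
rewrite exprD !exprS.

field.
by rewrite h1 h2 h4 h5.
Qed.
Definition u A B C i := P A i * P B i / P C i.

Definition Tg A B C z m := \sum_(j < m.+1)
     qbinom Q m j * (P A (m - j) * P B (m - j) / P C (m - j)) * z ^+ j.

Lemma Tgq A B C z m : Tg A B C z m = \sum_(0 <= j < m.+1) qb m j * u A B C (m - j) * z ^+ j.
Proof.
rewrite /Tg big_mkord; apply: eq_bigr => j _.
by rewrite qbinomE // -ltnS.
Qed.

Lemma uS A B C i : u A B C i.+1 = (1 - A) * (1 - B) / (1 - C) * u (A * Q) (B * Q) (C * Q) i.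
Proof. rewrite /u !PSl invfM; ring. Qed.

Lemma TgS A B C z m : Tg A B C z m.+1 =
  z * Tg A B C z m + (1 - A) * (1 - B) / (1 - C) * Tg (A * Q) (B * Q) (C * Q) (Q * z) m.
Proof.
rewrite !Tgq big_nat_recl //= subn0 expr0 mulr1 mul1r.
rewrite (@eq_big_nat _ _ _ 0 m.+1 _ (fun j => Q ^+ j.+1 * qb m j.+1 * u A B C (m - j) * z ^+ j.+1
    + z * (qb m j * u A B C (m - j) * z ^+ j))); last first.
  by move=> j _; rewrite subSS !exprS; ring.
rewrite big_split /= addrA -big_distrr /= addrC; congr (_ + _).
have -> : u A B C m.+1 + \sum_(0 <= i < m.+1) Q ^+ i.+1 * qb m i.+1 * u A B C (m - i) * z ^+ i.+1
  = \sum_(0 <= i < m.+2) Q ^+ i * qb m i * u A B C (m.+1 - i) * z ^+ i.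
  by rewrite [RHS]big_nat_recl //= qb_m0 expr0 !mul1r mulr1 subn0.
rewrite big_nat_recr //= (qb_over (ltnSn m)) mulr0 !mul0r addr0 big_distrr /=.
apply: eq_big_nat => j /andP [_ hj]; rewrite ltnS in hj.
rewrite subSn // uS exprMn; ring.
Qed.

Lemma mainL n x : forall m y, y != 0 ->
  (forall k, (k <= m)%N -> P (x * (Q / Q ^+ n) / y) k != 0) ->
  Lc n x y m = W n x y * Tg ((Q / Q ^+ n) / y) (Q * x / y) (x * (Q / Q ^+ n) / y) (Q / y) m.
Proof.
have hn : Q ^+ n != 0 by rewrite expf_neq0.
elim => [|m IH] y y0 hC.
  rewrite qCV Tgq big_nat1 /u subnn !P0 expr0 /=.
  by rewrite invr1 !mulr1.
set p := Q / Q ^+ n.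
have yQ : y / Q != 0 by rewrite mulf_neq0 // invr_eq0.
have a1 : p / (y / Q) = p / y * Q by field; rewrite ?y0 ?Q0.
have a2 : Q * x / (y / Q) = Q * x / y * Q by field; rewrite ?y0 ?Q0.
have a3 : x * p / (y / Q) = x * p / y * Q by field; rewrite ?y0 ?Q0.
have a4 : Q / (y / Q) = Q * (Q / y) by field; rewrite ?y0 ?Q0.
have hC' : forall k, (k <= m)%N -> P (x * p / (y / Q)) k != 0.
  move=> k km; rewrite a3.
  have := hC k.+1 km; rewrite PSl mulf_eq0 negb_or => /andP [_ ->] //.
have hC1 : 1 - x * p / y != 0.
  by have := hC 1%N isT; rewrite PS P0 expr0 mulr1 mul1r.
have hC2 : y - x * p != 0.
  have -> : y - x * p = y * (1 - x * p / y) by field.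
  by rewrite mulf_neq0.
rewrite LcS // (IH y) // ?(IH (y / Q)) //; last by move=> k km; apply: hC; apply: ltnW.
rewrite a1 a2 a3 a4 TgS.
have hW : (x - y / Q) * W n x y = W n x (y / Q) * (x - y / Q * Q ^+ n).
  by rewrite -WS WSl divfK.
have key : W n x y * ((1 - p / y) * (1 - Q * x / y) / (1 - x * p / y))
    = - (Q / y) * (1 - y / Q * Q ^+ n) * W n x (y / Q).
  have -> : W n x y * ((1 - p / y) * (1 - Q * x / y) / (1 - x * p / y))
      = - (Q / y) * ((x - y / Q) * W n x y) * (1 - p / y) / (1 - x * p / y).
    by field; rewrite y0 Q0 hC2.
  have hC3 : Q ^+ n * y - x * Q != 0.
    have -> : Q ^+ n * y - x * Q = Q ^+ n * (y - x * p) by rewrite /p; field.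
    by rewrite mulf_neq0.
  rewrite hW /p; field.
  by rewrite Q0 y0 hn hC3.
rewrite -/p.
set T1 := Tg _ _ _ _ m.
set T2 := Tg _ _ _ _ m.
have -> : W n x y * (Q / y * T1 + (1 - p / y) * (1 - Q * x / y) / (1 - x * p / y) * T2)
  = Q / y * W n x y * T1 + W n x y * ((1 - p / y) * (1 - Q * x / y) / (1 - x * p / y)) * T2 by ring.
rewrite key; ring.
Qed.
End Gen.

Local Open Scope complex_scope.

Theorem theorem5 (R : realType) (q : R) (n m : nat) (x y : R[i]) :
  0 < q -> q < 1 ->
  y != 0 ->
  (* side conditions making the right-hand side (and LHS) well-defined *)
  x != 0 ->
  qpoch y q%:C n != 0 ->
  (forall k, (k <= m)%N -> qpoch (x * q%:C ^ (1 - n%:Z) / y) q%:C k != 0) ->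
  phi21_term n x y q%:C (q%:C ^+ m.+1) =
  x ^+ n * qpoch (y / x) q%:C n / qpoch y q%:C n *
  \sum_(j < m.+1)
     qbinom q%:C m j *
     (qpoch (q%:C ^ (1 - n%:Z) / y) q%:C (m - j) * qpoch (q%:C * x / y) q%:C (m - j)
        / qpoch (x * q%:C ^ (1 - n%:Z) / y) q%:C (m - j)) *
     (q%:C / y) ^+ j.
Proof.
move=> q0 q1 y0 x0 hy hC.
set Q := q%:C.
have Q0 : Q != 0 by rewrite /Q fmorph_eq0 gt_eqF.
have Qk : forall k, (0 < k)%N -> 1 - Q ^+ k != 0.
  move=> k k0; have -> : 1 - Q ^+ k = (1 - q ^+ k)%:C by rewrite /Q rmorphB rmorph1 rmorphXn.
  rewrite fmorph_eq0 subr_eq0 eq_sym.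
  by rewrite lt_eqF // exprn_ilt1 ?ltW // -lt0n.
have hz : Q ^ (1 - n%:Z) = Q / Q ^+ n by rewrite expfzDr // expr1z -exprnN.
rewrite hz in hC *.
have E1 : phi21_term n x y Q (Q ^+ m.+1) = Lc Q n x y m / qpoch y Q n.
  rewrite /phi21_term /Lc big_mkord mulr_suml; apply: eq_bigr => k _.
  rewrite /G.
  have kn : (k <= n)%N by rewrite -ltnS.
  have hP : qpoch y Q n = qpoch y Q k * qpoch (y * Q ^+ k) Q (n - k) by rewrite -Padd subnKC.
  have h1 : qpoch y Q k != 0 := Pnz hy kn.
  have h2 : qpoch (y * Q ^+ k) Q (n - k) != 0.
    by move: hy; rewrite hP mulf_eq0 negb_or => /andP [].
  have h3 := PQnz Qk k.
  rewrite hP /e; field.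
  by rewrite h1 h2 h3.
rewrite E1 (mainL Q0 Qk y0 hC) (Wx _ _ _ x0) mulrAC.
by [].
Qed.
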